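(* Let $G$ be a finite group, $p$ a prime, $N\trianglelefteq G$ and $H\leq G$ with $G=NH$, and set $M:=N\cap H$. Let $K\trianglelefteq G$ with $K\leq M$ and let $\zeta\in\mathrm{Irr}_{p'}(N)$ be $G$-invariant with $\zeta_K\in\mathrm{Irr}(K)$. Write $\overline{G}:=G/K$, $\overline{N}:=N/K$, $\overline{H}:=H/K$, $\overline{M}:=M/K$, and suppose that $(\overline{G},\overline{N},\overline{\chi})\geq_c(\overline{H},\overline{M},\overline{\psi})$ for some $\overline{\chi}\in\mathrm{Irr}_{p'}(\overline{N})$ and $\overline{\psi}\in\mathrm{Irr}_{p'}(\overline{M})$. Let $\chi\in\mathrm{Irr}(N)$ and $\psi\in\mathrm{Irr}(M)$ be the inflations of $\overline{\chi}$ and $\overline{\psi}$. Then $$(G,N,\chi\zeta)\geq_c(H,M,\psi\zeta_M).$$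
   Context: $\mathrm{Irr}_{p'}(X)$ is the set of irreducible characters of $X$ of degree prime to $p$; $\zeta_K$ denotes restriction. Character triples and $\geq_c$: a character triple $(G,N,\vartheta)$ consists of $N\trianglelefteq G$ and a $G$-invariant $\vartheta\in\mathrm{Irr}(N)$. A projective representation of $G$ associated with $\vartheta$ is a map $\mathcal{P}:G\to\mathrm{GL}_{\vartheta(1)}(\mathbb{C})$ with $\mathcal{P}(x)\mathcal{P}(y)=\alpha(x,y)\mathcal{P}(xy)$ for a factor set $\alpha$, such that $\mathcal{P}|_N$ is a representation affording $\vartheta$ and $\mathcal{P}(xn)=\mathcal{P}(x)\mathcal{P}(n)$, $\mathcal{P}(nx)=\mathcal{P}(n)\mathcal{P}(x)$ for $x\in G,n\in N$. One writes $(G,N,\vartheta)\geq_c(H,M,\varphi)$ for character triples if $G=NH$, $M=N\cap H$, $\mathbf{C}_G(N)\leq H$, and there are projective representations $\mathcal{P}$ of $G$ associated with $\vartheta$ and $\mathcal{P}'$ of $H$ associated with $\varphi$, with factor sets $\alpha,\alpha'$, such that $\alpha|_{H\times H}=\alpha'$ and for every $c\in\mathbf{C}_G(N)$ the matrices $\mathcal{P}(c)$, $\mathcal{P}'(c)$ are scalar with the same scalar. *)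

(* Defs.v *)
From mathcomp Require Import all_boot all_order all_algebra all_fingroup all_solvable all_field all_character.
Unset Implicit Arguments. Unset Strict Implicit. Unset Printing Implicit Defensive.
Import GroupScope GRing.Theory Num.Theory.
Local Open Scope ring_scope.

Section CharTriples.
Variable gT : finGroupType.

Definition p'_degree (p : nat) (N : {group gT}) (chi : 'CF(N)) : bool :=
  ~~ (p %| Num.truncn (chi 1%g))%N.

Definition char_triple (G N : {group gT}) (theta : 'CF(N)) : Prop :=
  [/\ N <| G, theta \in irr N & G \subset 'I[theta]].

Definition proj_rep_assoc (G N : {group gT}) (theta : 'CF(N)) (n : nat)
    (P : gT -> 'M[algC]_n) (alpha : gT -> gT -> algC) : Prop :=
  [/\ theta 1%g = n%:R,
      {in G, forall x, P x \in unitmx},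
      {in G &, forall x y, P x *m P y = alpha x y *: P (x * y)%g},
      mx_repr N P /\ {in N, forall x, \tr (P x) = theta x}
    & {in G & N, forall x m, P (x * m)%g = P x *m P m /\ P (m * x)%g = P m *m P x}].

Definition geq_c (G N : {group gT}) (theta : 'CF(N))
                 (H M : {group gT}) (phi : 'CF(M)) : Prop :=
  [/\ char_triple G N theta, char_triple H M phi,
      [/\ G :=: (N * H)%g, M :=: (N :&: H)%g & 'C_G(N) \subset H] &
      exists (n n' : nat) (P : gT -> 'M[algC]_n) (P' : gT -> 'M[algC]_n')
             (alpha alpha' : gT -> gT -> algC),
        [/\ proj_rep_assoc G N theta n P alpha,
            proj_rep_assoc H M phi n' P' alpha',
            {in H &, forall x y, alpha x y = alpha' x y} &
            {in 'C_G(N), forall c, exists a : algC,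
               P c = a%:M /\ P' c = a%:M}]].
End CharTriples.
Arguments p'_degree {gT} p {N} chi.
Arguments char_triple {gT} G N theta.
Arguments proj_rep_assoc {gT} G N theta {n} P alpha.
Arguments geq_c {gT} G N theta H M phi.

(* Main.v *)
Require Import Defs.
From mathcomp Require Import all_boot all_order all_algebra all_fingroup all_solvable all_field all_character.
From Stdlib Require Import ClassicalEpsilon.
Import GroupScope GRing.Theory Num.Theory.
Local Open Scope ring_scope.
Set Implicit Arguments. Unset Strict Implicit. Unset Printing Implicit Defensive.

Section ProjRep.
Local Open Scope group_scope.
Variables (gT : finGroupType) (G N : {group gT}) (zeta : Iirr N).
Hypotheses (nsNG : N <| G) (IG : G \subset 'I['chi_zeta]).

Let Z := 'Chi_zeta.
Let d := irr_degree (socle_of_Iirr zeta).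
Let sNG : N \subset G. Proof. exact: normal_sub. Qed.
Let nNG : G \subset 'N(N). Proof. exact: normal_norm. Qed.

Let ZtrE x : x \in N -> \tr (Z x) = 'chi_zeta x.
Proof. by move=> Nx; rewrite -irrRepr cfunE Nx mulr1n. Qed.

Let Pg (g : gT) (A : 'M[algC]_d) : Prop :=
  A \in unitmx /\ forall x, x \in N -> A *m Z x = Z (x ^ g^-1) *m A.

Let Pg_ex g : g \in G -> exists A, Pg g A.
Proof.
move=> Gg; have nNg : g^-1 \in 'N(N) by rewrite groupV (subsetP nNG).
have rgP : mx_repr N (fun x => Z (x ^ g^-1)).
  split; first by rewrite conj1g repr_mx1.
  by move=> x y Nx Ny; rewrite conjMg repr_mxM // memJ_norm.
have : cfRepr (MxRepresentation rgP) == cfRepr Z.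
  apply/eqP/cfun_inP=> x Nx; rewrite !cfunE Nx !mulr1n.
  change (\tr (Z (x ^ g^-1)) = \tr (Z x)).
  rewrite !ZtrE ?memJ_norm //.
  have /subsetP/(_ g Gg) := IG; rewrite inE => /andP[_ /eqP {2}<-].
  by rewrite cfConjgE // (subsetP nNG).

move/cfRepr_rsimP/mx_rsim_def=> [B [B' BB' /= hB]].
have [uB' uB] := mulmx1_unit BB'.
exists B; split=> // x Nx.
have E : Z (x ^ g^-1) = B *m Z x *m B' := hB x Nx.
by rewrite E -[_ *m B' *m B]mulmxA BB' mulmx1.
Qed.

Let Aof (g : gT) : 'M[algC]_d :=
  if g == 1 then 1%:M else epsilon (inhabits 0) (Pg g).

Let Aof_spec g : g \in G -> Pg g (Aof g).
Proof.
move=> Gg; rewrite /Aof; case: eqP => [-> | _].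
  by split=> [|x Nx]; rewrite ?unitmx1 // invg1 conjg1 mul1mx mulmx1.
exact: (epsilon_spec (inhabits 0) (Pg g) (Pg_ex Gg)).
Qed.

Let T (g : gT) := repr (g *: N).
Let u (g : gT) := (T g)^-1 * g.

Let Tmem g : g^-1 * T g \in N.
Proof. by rewrite -mem_lcoset; apply: mem_repr (lcoset_refl N g). Qed.

Let uN g : u g \in N.
Proof. by rewrite /u -[g]invgK -invMg groupV invgK Tmem. Qed.

Let TG g : g \in G -> T g \in G.
Proof.
move=> Gg; rewrite -[T g](mulKVg g) groupM //.
exact: (subsetP sNG) (Tmem g).
Qed.

Let TM g m : m \in N -> T (g * m) = T g.
Proof. by move=> Nm; rewrite /T lcosetM lcoset_id. Qed.

Let Tn n : n \in N -> T n = 1.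
Proof. by move=> Nn; rewrite /T lcoset_id // repr_group. Qed.

Let Q (g : gT) : 'M[algC]_d := Aof (T g) *m Z (u g).

Let QN n : n \in N -> Q n = Z n.
Proof.
move=> Nn; rewrite /Q /u Tn // invg1 mul1g /Aof eqxx mul1mx //.
Qed.

Let QM g m : m \in N -> Q (g * m) = Q g *m Z m.
Proof.
move=> Nm; rewrite /Q /u TM // mulgA repr_mxM ?mulmxA //.
by have := uN g; rewrite /u.
Qed.

Let Qconj g x : g \in G -> x \in N -> Q g *m Z x = Z (x ^ g^-1) *m Q g.
Proof.
move=> Gg Nx; rewrite /Q -mulmxA -repr_mxM ?uN //.
have -> : u g * x = (x ^ (u g)^-1) * u g by rewrite conjgE invgK -!mulgA mulVg mulg1.
have NxJ : x ^ (u g)^-1 \in N by rewrite memJ_norm // groupV (subsetP (normal_norm nsNG)) // (subsetP sNG) // uN.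
rewrite repr_mxM ?uN // mulmxA.
have [_ hA] := Aof_spec (TG Gg); rewrite (hA _ NxJ) -conjgM -invMg /u mulKVg.
by rewrite -!mulmxA.
Qed.

Let Qml g m : g \in G -> m \in N -> Q (m * g) = Z m *m Q g.
Proof.
move=> Gg Nm; have Nmg : m ^ g \in N by rewrite memJ_norm // (subsetP nNG).
by rewrite conjgC QM // Qconj // conjgK.
Qed.

Let Qunit g : g \in G -> Q g \in unitmx.
Proof.
move=> Gg; have [uA _] := Aof_spec (TG Gg).
by rewrite unitmx_mul uA repr_mx_unit ?uN.
Qed.

Let Zabs : mx_absolutely_irreducible Z.
Proof. exact/groupC/socle_irr. Qed.

Let Qfactor x y : x \in G -> y \in G -> exists a, Q x *m Q y = (a *: Q (x * y))%R.
Proof.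
move=> Gx Gy; have Gxy : x * y \in G by rewrite groupM.
pose D := invmx (Q (x * y)) *m (Q x *m Q y).
have cD : centgmx Z D.
  apply/centgmxP=> m Nm.
  have Nm1 : m ^ y^-1 \in N by rewrite memJ_norm // groupV (subsetP nNG).
  have E1 : Q x *m Q y *m Z m = Z (m ^ (x * y)^-1) *m (Q x *m Q y).
    by rewrite -mulmxA Qconj // mulmxA Qconj // -mulmxA invMg conjgM.
  have E2 : invmx (Q (x * y)) *m Z (m ^ (x * y)^-1) = Z m *m invmx (Q (x * y)).
    rewrite -[Z (m ^ _)](mulmxK (Qunit Gxy)) -Qconj //.
    by rewrite -mulmxA mulKmx ?Qunit.
  by rewrite /D -mulmxA E1 mulmxA E2 -mulmxA.
have [a Da] := is_scalar_mxP (mx_abs_irr_cent_scalar Zabs cD).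
exists a; rewrite -mul_mx_scalar -Da /D mulKVmx //.
exact: Qunit.
Qed.

Let Qcent c : c \in G -> c \in 'C(N) -> exists a, Q c = a%:M.
Proof.
move=> Gc cNc.
have cQ : centgmx Z (Q c).
  apply/centgmxP=> m Nm; rewrite -QM // -Qml //.
  by rewrite (centP cNc).
have [a Da] := is_scalar_mxP (mx_abs_irr_cent_scalar Zabs cQ).
by exists a.
Qed.

Lemma proj_rep_exists : exists d (Q : gT -> 'M[algC]_d) (beta : gT -> gT -> algC),
  proj_rep_assoc G N 'chi_zeta Q beta /\
  {in G, forall c, c \in 'C(N) -> exists a, Q c = a%:M}.
Proof.
pose beta x y := epsilon (inhabits 0) (fun a => Q x *m Q y = (a *: Q (x * y))%R).
exists d, Q, beta; split; last exact: Qcent.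
split.
- by rewrite irr1_degree.
- exact: Qunit.
- move=> x y Gx Gy; exact: (epsilon_spec (inhabits 0) _ (Qfactor Gx Gy)).
- split; last first. move=> x Nx. rewrite QN //. exact: ZtrE Nx. 
  split; first by rewrite QN // repr_mx1.
  by move=> x y Nx Ny; rewrite QM // (QN Nx) (QN Ny).
- by move=> x m Gx Nm; rewrite QM // Qml // (QN Nm).
Qed.
End ProjRep.

Lemma tprodZl m1 n1 m2 n2 (a : algC) (A : 'M[algC]_(m1, n1)) (B : 'M[algC]_(m2, n2)) :
  tprod (a *: A) B = a *: tprod A B.
Proof.
elim: m1 n1 A => [|m1 IH] n1 A /=; first by rewrite scaler0.
have E1 : usubmx (a *: A : 'M_(1 + m1, n1)) = a *: usubmx (A : 'M_(1 + m1, n1)).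
  by apply/matrixP=> i j; rewrite !mxE.
have E2 : dsubmx (a *: A : 'M_(1 + m1, n1)) = a *: dsubmx (A : 'M_(1 + m1, n1)).
  by apply/matrixP=> i j; rewrite !mxE.
rewrite E1 E2 IH.
have E3 : trow (a *: usubmx (A : 'M_(1 + m1, n1))) B = a *: trow (usubmx (A : 'M_(1 + m1, n1))) B.
  by rewrite -!trowbE linearZ.
by rewrite E3 scale_col_mx.
Qed.


Lemma tprodZr m1 n1 m2 n2 (a : algC) (A : 'M[algC]_(m1, n1)) (B : 'M[algC]_(m2, n2)) :
  tprod A (a *: B) = a *: tprod A B.
Proof.
elim: m1 n1 A => [|m1 IH] n1 A /=; first by rewrite scaler0.
rewrite IH.
have E3 : trow (usubmx (A : 'M_(1 + m1, n1))) (a *: B) = a *: trow (usubmx (A : 'M_(1 + m1, n1))) B.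
  by rewrite linearZ.
by rewrite E3 scale_col_mx.
Qed.

Lemma tprod_scalar m n (a b : algC) :
  tprod (a%:M : 'M_m) (b%:M : 'M_n) = (a * b)%:M.
Proof.
have -> : (a%:M : 'M_m) = a *: 1%:M by rewrite scalemx1.
have -> : (b%:M : 'M_n) = b *: 1%:M by rewrite scalemx1.
by rewrite tprodZl tprodZr tprod1 scalerA scalemx1.
Qed.

Lemma combine (gT : finGroupType) (G N K : {group gT}) (thb : 'CF(N / K)) (th : 'CF(N))
  n1 (Pb : coset_of K -> 'M[algC]_n1) ab n2 (Q : gT -> 'M[algC]_n2) be :
  K <| G -> K \subset N -> N \subset G ->
  proj_rep_assoc (G / K)%G (N / K)%G thb Pb ab ->
  proj_rep_assoc G N th Q be ->
  proj_rep_assoc G N ((thb %% K)%CF * th)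
    (fun x => tprod (Pb (coset K x)) (Q x))
    (fun x y => ab (coset K x) (coset K y) * be x y).
Proof.
move=> nsKG sKN sNG [Pb1 Pbu Pbf [[Pbr1 PbrM] Pbtr] PbN] [Q1 Qu Qf [[Qr1 QrM] Qtr] QN].
have nKG : G \subset 'N(K) by apply: normal_norm.
have nsKN : K <| N by apply: normalS nsKG.
have nKx x : x \in G -> x \in 'N(K) by move=> Gx; apply: (subsetP nKG).
have cosM x y : x \in G -> y \in G -> coset K (x * y)%g = (coset K x * coset K y)%g.
  by move=> Gx Gy; rewrite morphM ?nKx.
have qG x : x \in G -> coset K x \in (G / K)%G by move=> Gx; apply: mem_quotient.
have qN x : x \in N -> coset K x \in (N / K)%G by move=> Nx; apply: mem_quotient.
split.
- rewrite cfunE cfModE ?group1 // morph1 Pb1 Q1.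
  by rewrite natrM.
- move=> x Gx; have uP := Pbu _ (qG x Gx); have uQ := Qu _ Gx.
  have E : tprod (Pb (coset K x)) (Q x) *m tprod (invmx (Pb (coset K x))) (invmx (Q x)) = 1%:M.
    by rewrite -tprodE !mulmxV // tprod1.
  by have [] := mulmx1_unit E.
- move=> x y Gx Gy /=; rewrite -tprodE Pbf ?qG // Qf //.
  by rewrite tprodZl tprodZr scalerA cosM.
- split; [split|].
  + by rewrite morph1 Pbr1 Qr1 tprod1.
  + move=> x y Nx Ny /=.
    by rewrite cosM ?(subsetP sNG) // PbrM ?qN // QrM // tprodE.
  + move=> x Nx; rewrite mxtrace_prod Pbtr ?qN // Qtr //.
    by rewrite cfunE cfModE.
- move=> x m Gx Nm /=; have Gm := subsetP sNG m Nm.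
  have [E1 E2] := PbN _ _ (qG x Gx) (qN m Nm).
  have [E3 E4] := QN _ _ Gx Nm.
  by rewrite !cosM // E1 E2 E3 E4 !tprodE.
Qed.

Lemma proj_rep_res (gT : finGroupType) (G N H M : {group gT}) (th : 'CF(N)) n
  (Q : gT -> 'M[algC]_n) be :
  H \subset G -> M \subset N ->
  proj_rep_assoc G N th Q be -> proj_rep_assoc H M ('Res[M] th) Q be.
Proof.
move=> sHG sMN [Q1 Qu Qf [[Qr1 QrM] Qtr] QN].
have sH := subsetP sHG; have sM := subsetP sMN.
split.
- by rewrite cfRes1.
- by move=> x Hx; apply: Qu; apply: sH.
- by move=> x y Hx Hy; apply: Qf; apply: sH.
- split; [split|].
  + exact: Qr1.
  + by move=> x y Mx My; apply: QrM; apply: sM.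
  + by move=> x Mx; rewrite cfResE // Qtr //; apply: sM.
- by move=> x m Hx Mm; apply: QN; [apply: sH | apply: sM].
Qed.

Lemma inertia_mod_sub (gT : finGroupType) (G N K : {group gT}) (phi : 'CF(N / K)) :
  N <| G -> K <| G -> (G / K)%g \subset 'I[phi] -> G \subset 'I[(phi %% K)%CF].
Proof.
move=> nsNG nsKG sI; apply/subsetP=> y Gy.
rewrite inE (subsetP (normal_norm nsNG)) //= (cfConjgMod _ nsNG nsKG Gy).
have := subsetP sI _ (mem_quotient K Gy); rewrite inE => /andP[_ /eqP ->].
by [].
Qed.

Unset Implicit Arguments.

Theorem proposition2p5 (gT : finGroupType) (p : nat) (G N H K : {group gT})
    (zeta : Iirr N) (chib : Iirr (N / K)) (psib : Iirr ((N :&: H) / K)) :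
  prime p ->
  N <| G -> H \subset G -> G :=: (N * H)%g ->
  K <| G -> K \subset N :&: H ->
  p'_degree p 'chi_zeta -> G \subset 'I['chi_zeta] ->
  'Res[K] 'chi_zeta \in irr K ->
  p'_degree p 'chi_chib -> p'_degree p 'chi_psib ->
  geq_c (G / K)%G (N / K)%G 'chi_chib (H / K)%G ((N :&: H) / K)%G 'chi_psib ->
  geq_c G N (('chi_chib %% K)%CF * 'chi_zeta)
        H (N :&: H)%G (('chi_psib %% K)%CF * 'Res[(N :&: H)%G] 'chi_zeta).
Proof.
move=> _ nsNG sHG defG nsKG sKM _ IGz irrKz _ _ hq.
case: hq => [[_ _ IGchib] [_ _ IHpsib] [_ _ CGq]
  [n [n' [P [P' [a [a' [pG pH aeq cen]]]]]]]].
set M := (N :&: H)%G.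
have sMN : M \subset N by apply: subsetIl.
have sMH : M \subset H by apply: subsetIr.
have sNG : N \subset G by apply: normal_sub.
have sKN : K \subset N by apply: subset_trans sKM sMN.
have sKH : K \subset H by apply: subset_trans sKM sMH.
have nsKN : K <| N by apply: normalS nsKG.
have nsKM : K <| M by apply: normalS (subset_trans sMN sNG) nsKG.
have nsKH : K <| H by apply: normalS nsKG.
have nsMH : M <| H by rewrite /M /= setIC (normalGI sHG nsNG).
have nKG : G \subset 'N(K) by apply: normal_norm.
have [d [Q [be [pQ Qc]]]] := proj_rep_exists nsNG IGz.
have pQH := proj_rep_res sHG sMN pQ.
have sCH : 'C_G(N) \subset H.
  rewrite -(quotientSGK _ sKH); last by apply: subset_trans (subsetIl _ _) nKG.
  exact: subset_trans (quotient_subcent _ _ _) CGq.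
have /irrP[t Dt] := irrKz.
have [irrM _ _ _] := constt_Ind_ext nsKN Dt.
have IrrMres : 'Res[M] 'chi_zeta \in irr M.
  apply: (@cfRes_irr_irr _ M K); first by apply: cfRes_char; apply: irr_char.
  by rewrite cfResRes.
have /irrP[tM DtM] := IrrMres.
have [t' Dt'] : exists t', 'Res[K] 'chi_tM = 'chi_t'.
  by exists t; rewrite -DtM cfResRes // Dt.
have [irrM' _ _ _] := constt_Ind_ext nsKM Dt'.
split.
- split=> //.
  + by have := irrM chib; rewrite mod_IirrE.
  + apply: subset_trans (inertia_mul _ _); rewrite subsetI IGz andbT.
    exact: inertia_mod_sub.
- split=> //.
  + by have := irrM' psib; rewrite mod_IirrE // DtM.
  + apply: subset_trans (inertia_mul _ _); rewrite subsetI.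
    rewrite inertia_mod_sub //=.
    apply/subsetP=> y Hy; have Gy := subsetP sHG y Hy.
    rewrite inE (subsetP (normal_norm nsMH)) //= cfConjgRes_norm //.
      by have := subsetP IGz y Gy; rewrite inE => /andP[_ /eqP ->].
      exact: (subsetP (normal_norm nsMH)).
    exact: (subsetP (normal_norm nsNG)).
- by split.
exists (n * d)%N, (n' * d)%N,
  (fun x => tprod (P (coset K x)) (Q x)), (fun x => tprod (P' (coset K x)) (Q x)),
  (fun x y => a (coset K x) (coset K y) * be x y),
  (fun x y => a' (coset K x) (coset K y) * be x y).
split.
- exact: combine.
- exact: combine.
- by move=> x y Hx Hy /=; rewrite aeq // mem_quotient.
- move=> c Cc; have /setIP[Gc cNc] := Cc.
  have [b Db] := Qc c Gc cNc.
  have Cq : coset K c \in 'C_(G / K)(N / K).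
    by apply: (subsetP (quotient_subcent _ _ _)); apply: mem_quotient.
  have [a0 [E1 E2]] := cen _ Cq.
  by exists (a0 * b); rewrite E1 E2 Db !tprod_scalar.
Qed.
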